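(* Let $\mathcal{G}$ be a hereditary class of graphs (i.e., $G\in\mathcal{G}$ implies $G'\in\mathcal{G}$ for every subgraph $G'$ of $G$) such that $|E(G)|\le \ell\cdot|V(G)|$ for every $G\in\mathcal{G}$, for some constant $\ell$. Then for every $G\in\mathcal{G}$ and every terminal set $\mathcal{T}\subseteq V(G)$, $\mathrm{DegCost}^*(\mathcal{T})\le 2\ell\cdot q^*(\mathcal{T})$.
   Context: For $u\in V(G)$, $N[u]$ is $u$ together with its neighbors; for a subgraph $G'$, $N[G']=\bigcup_{u\in V(G')}N[u]$ and $\mathrm{Cost}(G')=|N[G']|$. $\mathrm{DegCost}(G')$ is the sum over nodes of $G'$ of their degrees in $G$. A Steiner tree for $\mathcal{T}$ is a tree $T\subseteq G$ with $\mathcal{T}\subseteq V(T)$. $q^*(\mathcal{T})=\min\mathrm{Cost}(T)$ and $\mathrm{DegCost}^*(\mathcal{T})=\min\mathrm{DegCost}(T)$, both minima over Steiner trees $T$ for $\mathcal{T}$. *)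

(* Defs.v *)
From mathcomp Require Import all_boot all_order all_algebra.
Set Implicit Arguments. Unset Strict Implicit. Unset Printing Implicit Defensive.
Import Order.TTheory GRing.Theory Num.Theory.

Section Graphs.
Variable T : finType.

Definition is_graph (V : {set T}) (E : {set {set T}}) : Prop :=
  forall e, e \in E -> (e \subset V) /\ #|e| = 2.

Definition subgraph (V' : {set T}) (E' : {set {set T}})
    (V : {set T}) (E : {set {set T}}) : Prop :=
  is_graph V' E' /\ V' \subset V /\ E' \subset E.

Definition adj (E : {set {set T}}) : rel T := fun x y => [set x; y] \in E.

Definition connected (V' : {set T}) (E' : {set {set T}}) : Prop :=
  forall u v, u \in V' -> v \in V' ->
    exists p : seq T, path (adj E') u p && (last u p == v).

Definition acyclic (E' : {set {set T}}) : Prop :=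
  forall c : seq T, uniq c -> 3 <= size c -> ~~ cycle (adj E') c.

Definition is_tree (V' : {set T}) (E' : {set {set T}}) : Prop :=
  V' != set0 /\ connected V' E' /\ acyclic E'.

Definition steiner_tree (V : {set T}) (E : {set {set T}}) (Tm : {set T})
    (V' : {set T}) (E' : {set {set T}}) : Prop :=
  subgraph V' E' V E /\ is_tree V' E' /\ Tm \subset V'.

Definition closed_nbhd (V : {set T}) (E : {set {set T}}) (u : T) : {set T} :=
  u |: [set v in V | adj E u v].

Definition nbhd_sub (V : {set T}) (E : {set {set T}}) (V' : {set T}) : {set T} :=
  \bigcup_(u in V') closed_nbhd V E u.

Definition Cost (V : {set T}) (E : {set {set T}}) (V' : {set T}) : nat :=
  #|nbhd_sub V E V'|.

Definition deg (V : {set T}) (E : {set {set T}}) (u : T) : nat :=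
  #|[set v in V | adj E u v]|.

Definition DegCost (V : {set T}) (E : {set {set T}}) (V' : {set T}) : nat :=
  \sum_(u in V') deg V E u.

End Graphs.

Definition graph_class := forall T : finType, {set T} -> {set {set T}} -> Prop.

Definition hereditary (C : graph_class) : Prop :=
  forall (T : finType) (V V' : {set T}) (E E' : {set {set T}}),
    is_graph V E -> C T V E -> subgraph V' E' V E -> C T V' E'.

(* Main.v *)
Require Import Defs.
From mathcomp Require Import all_boot all_order all_algebra.
Import Order.TTheory GRing.Theory Num.Theory.
Local Open Scope ring_scope.

Lemma degcost_le (T : finType) (V : {set T}) (E : {set {set T}}) (V2 : {set T}) :
  is_graph V E ->
  (DegCost V E V2 <= 2 * #|[set e in E | e :&: V2 != set0]|)%N.
Proof.
move=> gE; set EH := [set e in E | e :&: V2 != set0].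
have step : (DegCost V E V2 <= \sum_(u : T) #|[set e in EH | u \in e]|)%N.
  rewrite /DegCost [X in (_ <= X)%N](bigID (fun u => u \in V2)) /=.
  apply: leq_trans (leq_addr _ _); apply: leq_sum => u uV2.
  rewrite /deg; set S := [set v in V | adj E u v].
  have inj : {in S &, injective (fun v => [set u; v])}.
    move=> v w _ _ H; have : v \in [set u; w] by rewrite -H set22.
    have : w \in [set u; v] by rewrite H set22.
    by rewrite !inE => /orP[/eqP wu|/eqP->//] /orP[/eqP vu|/eqP->//]; rewrite wu vu.
  rewrite -(card_in_imset inj); apply: subset_leq_card; apply/subsetP => e.
  case/imsetP => v; rewrite inE => /andP [vV ae] ->.
  rewrite !inE eqxx andbT; rewrite /adj in ae; rewrite ae /=; apply/set0Pn; exists u; by rewrite !inE eqxx uV2.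
apply: leq_trans step _.
have -> : (\sum_(u : T) #|[set e in EH | u \in e]| = \sum_(u : T) \sum_(e in EH) (u \in e))%N.
  apply: eq_bigr => u _; rewrite -sum1_card big_mkcond /= [RHS]big_mkcond /=; apply: eq_bigr => e _; rewrite inE; by case: (e \in EH); case: (u \in e).
rewrite (exchange_big) /= mulnC -sum_nat_const; apply: leq_sum => e eEH.
have [_ ce] : e \subset V /\ #|e| = 2%N by apply: gE; move: eEH; rewrite inE => /andP [].
by rewrite -ce -sum1_card [in X in (_ <= X)%N]big_mkcond /=; apply: leq_sum => i _; case: (i \in e).
Qed.

Theorem proposition1 (R : realFieldType) (C : graph_class) (l : R) :
  hereditary C ->
  (forall (T : finType) (V : {set T}) (E : {set {set T}}),
      is_graph V E -> C T V E -> (#|E|%:R <= l * #|V|%:R)) ->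
  forall (T : finType) (V : {set T}) (E : {set {set T}}) (Tm : {set T}),
    is_graph V E -> C T V E -> Tm \subset V ->
    forall (V2 : {set T}) (E2 : {set {set T}}),
      steiner_tree V E Tm V2 E2 ->
      exists (V1 : {set T}) (E1 : {set {set T}}),
        steiner_tree V E Tm V1 E1 /\
        (DegCost V E V1)%:R <= 2 * l * (Cost V E V2)%:R.
Proof.
move=> her bnd T V E Tm gE CE _ V2 E2 st.
exists V2, E2; split => //.
have V2V : V2 \subset V by case: st => [[_ [? _]] _].
set EH := [set e in E | e :&: V2 != set0].
set N := nbhd_sub V E V2.
have sub : subgraph N EH V E.
  split; last split.
  - move=> e; rewrite inE => /andP [eE /set0Pn [x]]; rewrite inE => /andP [xe xV2].
    have [eV ce] := gE e eE; split => //.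
    have /cards2P [a [b [ab ee]]] : #|e| == 2%N by rewrite ce.
    have inN : forall y z, y \in V2 -> z \in V -> [set y; z] \in E -> [set y; z] \subset N.
      move=> y z yV2 zV yzE; apply/subsetP => w; rewrite !inE => /orP [/eqP->|/eqP->];
      apply/bigcupP; exists y => //; rewrite /closed_nbhd !inE ?eqxx //.
      by rewrite zV /adj yzE orbT.
    move: xe; rewrite ee !inE => /orP [/eqP xa|/eqP xb].
    + subst x; apply: inN => //; first by apply: (subsetP eV); rewrite ee !inE eqxx orbT.
      by rewrite -ee.
    + subst x; rewrite setUC; apply: inN => //; first by apply: (subsetP eV); rewrite ee !inE eqxx.
      by rewrite setUC -ee.
  - apply/subsetP => w /bigcupP [u uV2]; rewrite /closed_nbhd !inE => /orP [/eqP->|/andP[]//].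
    exact: (subsetP V2V).
  - by apply/subsetP => e; rewrite inE => /andP [].
have := bnd _ _ _ (proj1 sub) (her _ _ _ _ _ gE CE sub) => H.
apply: le_trans (_ : (2 * #|EH|)%N%:R <= _).
  by rewrite ler_nat; apply: degcost_le.
by rewrite natrM -mulrA ler_pM2l // ltr0n.
Qed.
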